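(* There is a constant $c>0$ depending only on $d$ and $a$ (independent of $\eta$, $k$, $m$, $L$, $\bar\mu_0$) such that: (1) for every unit box $\triangle=B_k(y)$, $y\in\Omega_k$, as operators on $\mathcal L^2(\triangle)$, $$-\Delta^\eta_\triangle+\bar\mu_k+a_kQ_{\triangle,k}^*Q_{\triangle,k}\ \ge\ c\,(-\Delta^\eta_\triangle+1);$$ (2) as operators on $\mathcal L^2(\Omega)$, $$-\Delta^\eta_\Omega+\bar\mu_k+a_kQ_{\Omega,k}^*Q_{\Omega,k}\ \ge\ c\,(-\Delta^\eta_\Omega+1).$$ In particular $G_k(\Omega)$ exists as a bounded operator.
   Context: Standing setup. Fix an integer $d\ge1$, an odd integer $L>1$, integers $k\ge1$, $m\ge k$, and set $\eta=L^{-k}$. Let $\Omega=\eta\{0,1,\dots,L^m-1\}^d\subset\eta\mathbb Z^d$ and, for $0\le j\le m$, $\Omega_j=(L^j\eta)\{0,1,\dots,L^{m-j}-1\}^d$. For a finite set $O$ contained in a lattice of spacing $\epsilon$, $\mathcal L^2(O)$ denotes complex functions on $O$ with $\langle f,g\rangle=\epsilon^d\sum_{x\in O}\overline{f(x)}g(x)$. For $y\in (L^j\eta)\mathbb Z^d$ let $B_j(y)=\{x\in\eta\mathbb Z^d:\ y_\mu\le x_\mu<y_\mu+L^j\eta,\ \mu=0,\dots,d-1\}$. For a set $O$ which is a union of boxes $B_j(y)$, the averaging operator $Q_{O,j}:\mathcal L^2(O)\to\mathcal L^2(\{y: B_j(y)\subset O\})$ is $(Q_{O,j}f)(y)=L^{-jd}\sum_{x\in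 B_j(y)}f(x)$, with adjoint $(Q_{O,j}^*h)(x)=h(y_x)$, $x\in B_j(y_x)$. For a box $O=\eta(\{u_0,\dots,u_0+N-1\}\times\cdots)$ the Neumann Laplacian is $(\Delta^\eta_O f)(x)=\eta^{-2}\sum_{\mu}\big(f(x+\eta e_\mu)-2f(x)+f(x-\eta e_\mu)\big)$, where any value $f(x\pm\eta e_\mu)$ with $x\pm\eta e_\mu\notin O$ is replaced by $f(x)$. Fix $a\in(0,1]$ and set $a_j=a\frac{1-L^{-2}}{1-L^{-2j}}$. Fix $\bar\mu_0\ge0$, $\bar\mu_j=L^{2j}\bar\mu_0$. $G_k(\Omega)=(-\Delta^\eta_\Omega+\bar\mu_k+a_kQ_{\Omega,k}^*Q_{\Omega,k})^{-1}$. Operator inequalities are in the sense of quadratic forms. *)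

(* Defs.v *)
From HB Require Import structures.
From mathcomp Require Import all_boot all_order all_algebra.
From mathcomp Require Import reals.
From mathcomp Require Import complex.
Set Implicit Arguments. Unset Strict Implicit. Unset Printing Implicit Defensive.
Import Order.TTheory GRing.Theory Num.Theory.
Local Open Scope ring_scope.

(* A cubic lattice box with N points per side, in index coordinates:
   the index i : cube d N corresponds to the lattice point  x = u + eps * i
   (u the corner of the box, eps the lattice spacing).  All operators below
   are translation invariant, so the corner u does not enter them. *)
Definition cube (d N : nat) := {ffun 'I_d -> 'I_N}.

Section Ops.
Local Unset Implicit Arguments.
Variables (R : realType) (d N : nat).
Local Notation C := R[i].
Local Notation fn := (cube d N -> C).

Definition shift (x : cube d N) (mu : 'I_d) (n : nat) : cube d N :=
  [ffun nu => if nu == mu then insubd (x mu) n else x nu].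

Definition ip (eps : R) (f g : fn) : C :=
  (eps ^+ d)%:C%C * \sum_(x : cube d N) Num.conj (f x) * g x.

(* Neumann Laplacian on the box: out-of-box values f(x +- eps e_mu) are
   replaced by f(x) (this is what [shift] does at the boundary). *)
Definition neuLap (eps : R) (f : fn) : fn := fun x =>
  (eps ^- 2)%:C%C *
  \sum_(mu < d) (f (shift x mu (x mu).+1) - 2%:R * f x + f (shift x mu (x mu).-1)).

(* Averaging over blocks of b^d points (b = L^j) : functions on the box
   -> functions on the set of blocks (indexed by cube d (N %/ b)); the block
   of index x is the Y with Y_mu = x_mu %/ b (we assume b divides N and the
   corner of the box is a multiple of the block side). *)
Definition inblock (b : nat) (Y : cube d (N %/ b)) (x : cube d N) : bool :=
  [forall mu, (x mu %/ b)%N == (Y mu : nat)].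

Definition Qav (b : nat) (f : fn) : cube d (N %/ b) -> C := fun Y =>
  ((b ^ d)%:R : C)^-1 * \sum_(x | inblock b Y x) f x.

(* adjoint: (Q^* h)(x) = h(y_x), y_x the (unique) block containing x *)
Definition Qadj (b : nat) (h : cube d (N %/ b) -> C) : fn := fun x =>
  \sum_(Y | inblock b Y x) h Y.

Definition Hop (eps mu a : R) (b : nat) (f : fn) : fn := fun x =>
  - neuLap eps f x + mu%:C%C * f x + a%:C%C * Qadj b (Qav b f) x.

Definition Lap1 (eps : R) (f : fn) : fn := fun x => - neuLap eps f x + f x.

Definition form_ge (eps : R) (A B : fn -> fn) : Prop :=
  forall f : fn, ip eps f (B f) <= ip eps f (A f).

End Ops.

Arguments shift {d N} x mu n.
Arguments ip {R d N} eps f g.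
Arguments neuLap {R d N} eps f x.
Arguments inblock {d N} b Y x.
Arguments Qav {R d N} b f Y.
Arguments Qadj {R d N} b h x.
Arguments Hop {R d N} eps mu a b f x.
Arguments Lap1 {R d N} eps f x.
Arguments form_ge {R d N} eps A B.

Definition etaL (R : realType) (L k : nat) : R := ((L%:R : R) ^+ k)^-1.
Definition a_j (R : realType) (a : R) (L j : nat) : R :=
  a * (1 - (L%:R : R) ^- 2) / (1 - (L%:R : R) ^- (2 * j)).
Definition mubar (R : realType) (mu0 : R) (L j : nat) : R :=
  (L%:R : R) ^+ (2 * j) * mu0.
Arguments etaL R L k : clear implicits.

(* Main.v *)
Require Import Defs.
From HB Require Import structures.
From mathcomp Require Import all_boot all_order all_algebra.
From mathcomp Require Import reals complex.
From mathcomp Require Import ring lra.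
From Stdlib Require Import FunctionalExtensionality.
Import Order.TTheory GRing.Theory Num.Theory.
Local Open Scope ring_scope.

Section Comb.
Variable R : realType.

Lemma cs_seq (I : Type) (s : seq I) (u : I -> R) :
  (\sum_(i <- s) u i) ^+ 2 <= (size s)%:R * \sum_(i <- s) u i ^+ 2.
Proof.
elim: s => [|x s IH]; first by rewrite !big_nil expr0n /= mulr0.
rewrite !big_cons /=.
set S := \sum_(i <- s) u i in IH *; set Q := \sum_(i <- s) u i ^+ 2 in IH *.
set n := (size s)%:R in IH *.
have n0 : 0 <= n by rewrite /n ler0n.
have Q0 : 0 <= Q by rewrite /Q; apply: sumr_ge0 => i _; exact: sqr_ge0.
rewrite -/S -/Q mulrSr -/n.
have key : 0 <= n * (n * u x ^+ 2 + Q - 2 * u x * S) by have := sqr_ge0 (n * u x - S); nra.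
move: n0; rewrite le0r => /orP[/eqP n00|npos].
  have : S ^+ 2 <= 0 by move: IH; rewrite n00 mul0r.
  move=> HS; have S0 : S = 0 by apply/eqP; rewrite -sqrf_eq0 eq_le HS sqr_ge0.
  by rewrite S0 n00 addr0 add0r mul1r lerDl.
have : 0 <= n * u x ^+ 2 + Q - 2 * u x * S by rewrite -(pmulr_rge0 _ npos).
nra.
Qed.

Variable d : nat.

Section Shift.
Variable N : nat.
Implicit Types x : cube d N.

Lemma shift_val x mu n : val (shift x mu n mu) = if (n < N)%N then n else x mu.
Proof. by rewrite /shift ffunE eqxx val_insubd. Qed.

Lemma shift_valn x mu n : nat_of_ord (shift x mu n mu) = if (n < N)%N then n else x mu.
Proof. exact: shift_val. Qed.

Lemma shift_neq x mu n nu : nu != mu -> shift x mu n nu = x nu.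
Proof. by rewrite /shift ffunE => /negbTE ->. Qed.

Lemma shift_id x mu : shift x mu (x mu) = x.
Proof.
apply/ffunP => nu; rewrite /shift ffunE; case: eqP => // ->.
by apply: val_inj; rewrite val_insubd ltn_ord.
Qed.

Lemma shift_shift x mu n m : (m < N)%N -> shift (shift x mu n) mu m = shift x mu m.
Proof.
move=> mN; apply/ffunP => nu; rewrite /shift !ffunE; case: eqP => // _.
by apply: val_inj; rewrite !val_insubd mN.
Qed.

End Shift.

Section Poinc.
Variable b : nat.
Local Notation cb := (cube d b).
Implicit Types (g : cb -> R) (z : cb).

Definition Dg g (j : 'I_d) z := (g (shift z j (z j).+1) - g z) ^+ 2.
Definition Eg g := \sum_z \sum_(j < d) Dg g j z.

Lemma Dg_ge0 g j z : 0 <= Dg g j z.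
Proof. exact: sqr_ge0. Qed.

Lemma line_bound g z (j : 'I_d) (t : nat) : (t < b)%N ->
  (g z - g (shift z j t)) ^+ 2 <= b%:R * \sum_(v < b) Dg g j (shift z j v).
Proof.
move=> tb.
pose phi v := g (shift z j v).
suff key : forall p q, (p <= q < b)%N ->
    (phi q - phi p) ^+ 2 <= b%:R * \sum_(v < b) Dg g j (shift z j v).
  have -> : g z = phi (z j) by rewrite /phi shift_id.
  case: (leqP (z j) t) => h.
    by rewrite -sqrrN opprB; apply: key; rewrite h tb.
  by apply: key; rewrite (ltnW h) ltn_ord.
move=> p q /andP[pq qb].
have -> : phi q - phi p = \sum_(p <= v < q) (phi v.+1 - phi v).
  by rewrite telescope_sumr.
apply: le_trans; first exact: cs_seq.
rewrite size_iota.
have Hs : \sum_(p <= v < q) (phi v.+1 - phi v) ^+ 2 <= \sum_(v < b) Dg g j (shift z j v).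
  have -> : \sum_(p <= v < q) (phi v.+1 - phi v) ^+ 2 = \sum_(p <= v < q) Dg g j (shift z j v).
    rewrite big_nat_cond [RHS]big_nat_cond; apply: eq_bigr => v /andP[/andP[_ vq] _].
    have vb : (v < b)%N by apply: leq_trans vq (ltnW qb).
    rewrite /Dg shift_val vb shift_shift //; exact: leq_ltn_trans vq qb.
  rewrite -(big_mkord xpredT (fun v => Dg g j (shift z j v))).
  rewrite (@big_cat_nat _ _ _ p 0 b) /=; [|exact: leq0n|exact: leq_trans pq (ltnW qb)].
  rewrite (@big_cat_nat _ _ _ q p b) /=; [|exact: pq|exact: ltnW].
  set A := \sum_(0 <= i < p) _; set B := \sum_(q <= i < b) _.
  have A0 : 0 <= A by apply: sumr_ge0 => i _; exact: Dg_ge0.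
  have B0 : 0 <= B by apply: sumr_ge0 => i _; exact: Dg_ge0.
  lra.
have S0 : 0 <= \sum_(p <= v < q) (phi v.+1 - phi v) ^+ 2.
  by apply: sumr_ge0 => i _; exact: sqr_ge0.
apply: ler_pM; rewrite ?ler0n //.
by rewrite ler_nat; apply: leq_trans (leq_subr _ _) (ltnW qb).
Qed.


Definition swp (j : 'I_d) (u v : 'I_b) z : cb :=
  [ffun nu => if nu == j then (if z j == u then v else if z j == v then u else z j)
              else z nu].

Lemma swpK j u v : involutive (swp j u v).
Proof.
move=> z; apply/ffunP => nu; rewrite /swp !ffunE eqxx.
case: eqP => [->|//].
case: (eqVneq (z j) u) => [->|zu].
  by rewrite eqxx; case: eqVneq.
case: (eqVneq (z j) v) => [->|zv]; first by rewrite eqxx.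
by rewrite (negbTE zu) (negbTE zv).
Qed.

Lemma sum_shift (F : cb -> R) (j : 'I_d) (v : 'I_b) :
  \sum_z F (shift z j v) = b%:R * \sum_(z : cb | z j == v) F z.
Proof.
have E1 : forall z, F (shift z j v) = \sum_(u < b) (if z j == u then F (shift z j v) else 0).
  by move=> z; rewrite -big_mkcond (big_pred1 (z j)) // => u; rewrite /= eq_sym.
rewrite (eq_bigr _ (fun z _ => E1 z)) exchange_big /=.
under eq_bigr do rewrite -big_mkcond /=.
have E2 : forall u : 'I_b, \sum_(z : cb | z j == u) F (shift z j v) = \sum_(z : cb | z j == v) F z.
  move=> u; rewrite (reindex_inj (inv_inj (swpK j u v))) /=.
  have P : forall z, (swp j u v z j == u) = (z j == v).
    move=> z; rewrite /swp ffunE eqxx.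
    case: (eqVneq (z j) u) => [->|zu]; first by rewrite eq_sym.
    case: (eqVneq (z j) v) => [_|zv]; first by rewrite eqxx.
    by rewrite (negbTE zu).
  rewrite (eq_bigl _ _ P); apply: eq_bigr => z /eqP zv.
  have -> : shift (swp j u v z) j v = shift z j v.
    apply/ffunP => nu; rewrite /shift /swp !ffunE; case: eqP => // _.
    by apply: val_inj; rewrite !val_insubd ltn_ord.
  by rewrite -zv shift_id.
rewrite (eq_bigr _ (fun u _ => E2 u)) sumr_const card_ord.
by rewrite mulr_natl.
Qed.

Definition mix (j : nat) (s r : cb) : cb := [ffun mu : 'I_d => if (mu < j)%N then s mu else r mu].

Lemma mix0 s r : mix 0 s r = r.
Proof. by apply/ffunP => mu; rewrite ffunE. Qed.

Lemma mixd s r : mix d s r = s.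
Proof. by apply/ffunP => mu; rewrite ffunE ltn_ord. Qed.

Lemma mixS (j : 'I_d) s r : mix j.+1 s r = shift (mix j s r) j (mix j r s j).
Proof.
apply/ffunP => mu; rewrite /shift /mix !ffunE ltnn.
case: (eqVneq mu j) => [->|muj]; first by apply: val_inj; rewrite val_insubd ltn_ord ltnSn.
by rewrite ltnS leq_eqVlt (negbTE (muj : (mu:nat) != j)).
Qed.

Lemma mix_inv (j : nat) : involutive (fun p : cb * cb => (mix j p.2 p.1, mix j p.1 p.2)).
Proof.
by move=> [r s] /=; congr pair; apply/ffunP => mu; rewrite !ffunE; case: (mu < j)%N.
Qed.

Lemma pair_bound g :
  \sum_(r : cb) \sum_(s : cb) (g r - g s) ^+ 2 <= d%:R * (#|{: cb}|%:R * b%:R * b%:R) * Eg g.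
Proof.
set n := #|{: cb}|%:R.
have step1 : forall r s, (g r - g s) ^+ 2 <=
    d%:R * \sum_(j < d) (g (mix j s r) - g (mix j.+1 s r)) ^+ 2.
  move=> r s.
  have -> : g r - g s = \sum_(j < d) (g (mix j s r) - g (mix j.+1 s r)).
    rewrite -(big_mkord xpredT (fun j => g (mix j s r) - g (mix j.+1 s r))).
    have := @telescope_sumr _ 0 d (fun k => - g (mix k s r)) (leq0n d).
    rewrite mix0 mixd opprK addrC => <-.
    by apply: eq_bigr => i _; rewrite opprK addrC.
  apply: le_trans; first exact: cs_seq.
  by rewrite /index_enum -enumT size_enum_ord.
have step2 : forall j : 'I_d,
    \sum_(r : cb) \sum_(s : cb) (g (mix j s r) - g (mix j.+1 s r)) ^+ 2 <=
    n * b%:R * b%:R * \sum_z Dg g j z.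
  move=> j.
  pose K (p : cb * cb) := (g p.1 - g (shift p.1 j (p.2 j))) ^+ 2.
  have -> : \sum_(r : cb) \sum_(s : cb) (g (mix j s r) - g (mix j.+1 s r)) ^+ 2
      = \sum_(r : cb) \sum_(s : cb) K (mix j s r, mix j r s).
    by apply: eq_bigr => r _; apply: eq_bigr => s _; rewrite /K /= mixS.
  rewrite (pair_big xpredT xpredT (fun r s => K (mix j s r, mix j r s))) /=.
  rewrite -(reindex_inj (inv_inj (mix_inv j)) (P:=xpredT) (F:=K)).
  rewrite -(pair_big xpredT xpredT (fun z w => K (z, w))) /=.
  apply: le_trans (_ : \sum_(z : cb) \sum_(w : cb) (b%:R * \sum_(v < b) Dg g j (shift z j v)) <= _).
    apply: ler_sum => z _; apply: ler_sum => w _; apply: line_bound; exact: ltn_ord.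
  rewrite (eq_bigr (fun z : cb => n * (b%:R * \sum_(v < b) Dg g j (shift z j v)))); last first.
    move=> z _; rewrite sumr_const -[_ *+ #|_|]mulr_natl /n; congr (_ * _).
  rewrite -mulr_sumr -mulr_sumr exchange_big /=.
  under eq_bigr do rewrite sum_shift.
  rewrite -mulr_sumr.
  have -> : \sum_(v < b) \sum_(z : cb | z j == v) Dg g j z = \sum_(z : cb) Dg g j z.
    under eq_bigr do rewrite big_mkcond.
    rewrite exchange_big /=; apply: eq_bigr => z _.
    by rewrite -big_mkcond /= (big_pred1 (z j)) // => v; rewrite /= eq_sym.
  by rewrite !mulrA.
apply: (@le_trans _ _ (\sum_(r : cb) \sum_(s : cb) d%:R * \sum_(j < d) (g (mix j s r) - g (mix j.+1 s r)) ^+ 2)).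
  by apply: ler_sum => r _; apply: ler_sum => s _; exact: step1.
under eq_bigr do rewrite -mulr_sumr.
rewrite -mulr_sumr -mulrA; apply: ler_wpM2l; first exact: ler0n.
under eq_bigr do rewrite exchange_big /=.
have EgE : Eg g = \sum_(j < d) \sum_(z : cb) Dg g j z by rewrite /Eg exchange_big.
rewrite exchange_big /= EgE mulr_sumr.
by apply: ler_sum => j _; exact: step2.
Qed.


Lemma pair_id g : \sum_(r : cb) \sum_(s : cb) (g r - g s) ^+ 2 =
  2 * (#|{: cb}|%:R * \sum_(z : cb) g z ^+ 2) - 2 * (\sum_(z : cb) g z) ^+ 2.
Proof.
set n := #|{: cb}|%:R.
have E : forall r : cb, \sum_(s : cb) (g r - g s) ^+ 2 =
    \sum_(s : cb) g r ^+ 2 + \sum_(s : cb) g s ^+ 2 - 2 * \sum_(s : cb) g r * g s.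
  move=> r; rewrite mulr_sumr -big_split -sumrB /=.
  by apply: eq_bigr => s _; ring.
rewrite (eq_bigr _ (fun r _ => E r)) sumrB big_split /=.
have C : forall x : R, \sum_(s : cb) x = n * x.
  by move=> x; rewrite sumr_const -[_ *+ #|_|]mulr_natl /n.
under eq_bigr do rewrite C.
rewrite C -mulr_sumr.
under eq_bigr do rewrite -mulr_sumr.
rewrite -mulr_sumr -mulr_suml expr2.
ring.
Qed.

Lemma poincare_real g :
  #|{: cb}|%:R * \sum_(z : cb) g z ^+ 2 <=
  #|{: cb}|%:R * (d%:R * b%:R * b%:R * Eg g) + (\sum_(z : cb) g z) ^+ 2.
Proof.
have H := pair_bound g; rewrite pair_id in H.
have E0 : 0 <= Eg g by apply: sumr_ge0 => z _; apply: sumr_ge0 => j _; exact: Dg_ge0.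
have n0 : 0 <= (#|{: cb}|%:R : R) by exact: ler0n.
have X0 : 0 <= d%:R * b%:R * b%:R * Eg g :> R by rewrite !mulr_ge0 ?ler0n.
move: H X0; rewrite -!mulrA.
set A := _ * Eg g; set n := #|{: cb}|%:R.
nra.
Qed.

End Poinc.

Section Block.
Variables (N b : nat).
Hypotheses (b0 : (0 < b)%N) (bN : (b %| N)%N).
Local Notation M := (N %/ b)%N.

Lemma phi_lt (Y : cube d M) (r : cube d b) mu : (Y mu * b + r mu < N)%N.
Proof.
move: (ltn_ord (Y mu)) (ltn_ord (r mu)).
move: (nat_of_ord (Y mu)) (nat_of_ord (r mu)) => y z HY Hr.
rewrite -(divnK bN).
apply: (@leq_trans (y.+1 * b)); first by rewrite mulSnr ltn_add2l.
by rewrite leq_mul2r HY orbT.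
Qed.

Definition Phi (Y : cube d M) (r : cube d b) : cube d N :=
  [ffun mu => Ordinal (phi_lt Y r mu)].

Lemma Phi_val (Y : cube d M) (r : cube d b) mu : val (Phi Y r mu) = (Y mu * b + r mu)%N.
Proof. by rewrite ffunE. Qed.

Lemma div_lt (x : cube d N) mu : (x mu %/ b < M)%N.
Proof. by rewrite ltn_divLR // divnK. Qed.

Definition Phiinv (x : cube d N) : cube d M * cube d b :=
  ([ffun mu => Ordinal (div_lt x mu)], [ffun mu => Ordinal (ltn_pmod (x mu) b0)]).

Lemma Phi_div (Y : cube d M) (r : cube d b) mu : ((Y mu * b + r mu) %/ b)%N = Y mu.
Proof.
move: (ltn_ord (r mu)); move: (nat_of_ord (r mu)) (nat_of_ord (Y mu)) => z y hz.
by rewrite divnMDl // divn_small ?addn0.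
Qed.

Lemma Phi_bij : bijective (fun p : cube d M * cube d b => Phi p.1 p.2).
Proof.
exists Phiinv.
  move=> [Y r] /=; congr pair; apply/ffunP => mu; apply: val_inj; rewrite ffunE /= Phi_val.
    exact: Phi_div.
  by rewrite modnMDl modn_small.
move=> x; apply/ffunP => mu; apply: val_inj; rewrite Phi_val /= !ffunE /=.
by rewrite -divn_eq.
Qed.

Lemma sum_Phi (V : zmodType) (F : cube d N -> V) :
  \sum_(x : cube d N) F x = \sum_(Y : cube d M) \sum_(r : cube d b) F (Phi Y r).
Proof.
rewrite pair_big /= (reindex (fun p : cube d M * cube d b => Phi p.1 p.2)) //.
by apply: onW_bij; exact: Phi_bij.
Qed.

Lemma inblock_Phi (Y Y' : cube d M) (r : cube d b) : inblock b Y (Phi Y' r) = (Y' == Y).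
Proof.
apply/forallP/eqP => [H|->].
  by apply/ffunP => mu; apply: val_inj; move/eqP: (H mu); rewrite Phi_val Phi_div.
by move=> mu; rewrite Phi_val Phi_div.
Qed.

Lemma sum_block (V : zmodType) (F : cube d N -> V) (Y : cube d M) :
  \sum_(x : cube d N | inblock b Y x) F x = \sum_(r : cube d b) F (Phi Y r).
Proof.
rewrite big_mkcond sum_Phi /=.
under eq_bigr do under eq_bigr do rewrite inblock_Phi.
rewrite (bigD1 Y) //= [X in _ + X]big1 ?addr0.
  by apply: eq_bigr => r _; rewrite eqxx.
by move=> Y' /negbTE nY; apply: big1 => r _; rewrite nY.
Qed.

Lemma Eg_block (h : cube d N -> R) :
  \sum_(Y : cube d M) Eg b (h \o Phi Y) <= Eg N h.
Proof.
rewrite [Eg N h]/Eg sum_Phi; apply: ler_sum => Y _; apply: ler_sum => r _.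
apply: ler_sum => j _; rewrite /Dg /=.
case: (ltnP (r j).+1 b) => hb.
  have -> : shift (Phi Y r) j (Phi Y r j).+1 = Phi Y (shift r j (r j).+1).
    apply/ffunP => nu; apply: val_inj; rewrite Phi_val.
    case: (eqVneq nu j) => [->|nj].
      rewrite !shift_val !Phi_val shift_valn hb addnS.
      have -> : ((Y j * b + r j).+1 < N)%N.
        by have := phi_lt Y (shift r j (r j).+1) j; rewrite shift_valn hb addnS.
      by [].
    by rewrite !shift_neq // !Phi_val ?shift_neq.
  by [].
have -> : shift r j (r j).+1 = r.
  apply/ffunP => nu; rewrite /shift ffunE; case: eqP => // ->.
  by apply: val_inj; rewrite val_insubd ltnNge hb.
by rewrite subrr expr0n /=; exact: sqr_ge0.
Qed.

End Block.
End Comb.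
Arguments Eg {R d b} g.
Arguments Dg {R d b} g j z.

Section Cx.
Variable R : realType.
Local Notation C := R[i].

Definition sq (z : C) : R := complex.Re z ^+ 2 + complex.Im z ^+ 2.

Lemma sq_ge0 z : 0 <= sq z.
Proof. by rewrite addr_ge0 ?sqr_ge0. Qed.

Lemma conj_mul (z : C) : Num.conj z * z = (sq z)%:C%C.
Proof. by rewrite -normCKC -add_Re2_Im2. Qed.

Lemma ReD (x y : C) : complex.Re (x + y) = complex.Re x + complex.Re y. Proof. by case: x; case: y. Qed.
Lemma ImD (x y : C) : complex.Im (x + y) = complex.Im x + complex.Im y. Proof. by case: x; case: y. Qed.
Lemma ReB (x y : C) : complex.Re (x - y) = complex.Re x - complex.Re y. Proof. by case: x; case: y. Qed.
Lemma ImB (x y : C) : complex.Im (x - y) = complex.Im x - complex.Im y. Proof. by case: x; case: y. Qed.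
Lemma Re0 : complex.Re (0 : C) = 0. Proof. by []. Qed.
Lemma Im0 : complex.Im (0 : C) = 0. Proof. by []. Qed.

Lemma Re_sum (I : Type) (s : seq I) (P : pred I) (F : I -> C) :
  complex.Re (\sum_(i <- s | P i) F i) = \sum_(i <- s | P i) complex.Re (F i).
Proof. exact: (big_morph _ ReD Re0). Qed.
Lemma Im_sum (I : Type) (s : seq I) (P : pred I) (F : I -> C) :
  complex.Im (\sum_(i <- s | P i) F i) = \sum_(i <- s | P i) complex.Im (F i).
Proof. exact: (big_morph _ ImD Im0). Qed.

Lemma ReMr (x : R) (z : C) : complex.Re (x%:C%C * z) = x * complex.Re z.
Proof. by case: z => a b /=; rewrite !mul0r subr0. Qed.
Lemma ImMr (x : R) (z : C) : complex.Im (x%:C%C * z) = x * complex.Im z.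
Proof. by case: z => a b /=; rewrite !mul0r addr0. Qed.

Lemma sqMr (x : R) (z : C) : sq (x%:C%C * z) = x ^+ 2 * sq z.
Proof. rewrite /sq ReMr ImMr; ring. Qed.

Lemma natC n : (n%:R : C) = (n%:R : R)%:C%C.
Proof. by rewrite rmorph_nat. Qed.

End Cx.
Arguments sq {R} z.

Section Forms.
Variable R : realType.
Local Notation C := R[i].
Variables (d N : nat).
Local Notation cN := (cube d N).

Lemma shift_out (x : cN) mu n : ~~ (n < N)%N -> shift x mu n = x.
Proof.
move=> /negbTE nN; apply/ffunP => nu; rewrite /shift ffunE; case: eqP => // ->.
by apply: val_inj; rewrite val_insubd nN.
Qed.

Definition psi (mu : 'I_d) (x : cN) : cN := [ffun nu => if nu == mu then ordS (x mu) else x nu].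

Lemma psi_inj mu : injective (psi mu).
Proof.
move=> x y /ffunP H; apply/ffunP => nu; have := H nu; rewrite !ffunE.
case: eqP => [->|//]; exact: ordS_inj.
Qed.

Lemma T1 (f : cN -> C) (mu : 'I_d) :
  \sum_(x : cN) Num.conj (f x) * (f (shift x mu (x mu).-1) - f x) =
  \sum_(x : cN) Num.conj (f (shift x mu (x mu).+1)) * (f x - f (shift x mu (x mu).+1)).
Proof.
rewrite (reindex_inj (psi_inj mu)) /=; apply: eq_bigr => y _.
case: (ltnP (y mu).+1 N) => hy.
  have E : psi mu y = shift y mu (y mu).+1.
    apply/ffunP => nu; rewrite /psi /shift !ffunE; case: eqP => // _.
    by apply: val_inj; rewrite val_insubd hy /= modn_small.
  have E2 : nat_of_ord (psi mu y mu) = (y mu).+1 by rewrite E shift_valn hy.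
  by rewrite E2 /= E shift_shift ?ltn_ord // shift_id.
have -> : shift y mu (y mu).+1 = y by apply: shift_out; rewrite -leqNgt.
have E2 : nat_of_ord (psi mu y mu) = 0%N.
  rewrite /psi ffunE eqxx /=.
  have -> : (y mu).+1 = N by apply/eqP; rewrite eqn_leq hy ltn_ord.
  exact: modnn.
by rewrite E2 /= -E2 shift_id !subrr !mulr0.
Qed.

Lemma neu_mu (f : cN -> C) (mu : 'I_d) :
  \sum_(x : cN) Num.conj (f x) *
     (f (shift x mu (x mu).+1) - 2%:R * f x + f (shift x mu (x mu).-1)) =
  - (\sum_(x : cN) sq (f (shift x mu (x mu).+1) - f x))%:C%C.
Proof.
have -> : \sum_(x : cN) Num.conj (f x) *
     (f (shift x mu (x mu).+1) - 2%:R * f x + f (shift x mu (x mu).-1)) =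
   \sum_(x : cN) Num.conj (f x) * (f (shift x mu (x mu).+1) - f x) +
   \sum_(x : cN) Num.conj (f x) * (f (shift x mu (x mu).-1) - f x).
  by rewrite -big_split /=; apply: eq_bigr => x _; ring.
rewrite T1 -big_split /= rmorph_sum -sumrN; apply: eq_bigr => x _.
transitivity (- (Num.conj (f (shift x mu (x mu).+1) - f x) * (f (shift x mu (x mu).+1) - f x))).
  rewrite rmorphB /=; ring.
by rewrite conj_mul.
Qed.

Definition Ec (f : cN -> C) :=
  Eg (fun x : cN => complex.Re (f x)) + Eg (fun x : cN => complex.Im (f x)).

Lemma neu_form (eps : R) (f : cN -> C) :
  \sum_(x : cN) Num.conj (f x) * neuLap eps f x = - ((eps ^- 2) * Ec f)%:C%C.
Proof.
rewrite /neuLap.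
under eq_bigr do rewrite mulrCA mulr_sumr.
rewrite -mulr_sumr exchange_big /=.
under eq_bigr do rewrite neu_mu.
rewrite sumrN -rmorph_sum mulrN rmorphM /=; congr (- (_ * _)).
congr (_%:C%C).
rewrite /Ec /Eg -big_split /= exchange_big /=; apply: eq_bigr => x _.
rewrite -big_split /=; apply: eq_bigr => j _.
by rewrite /Dg /sq ReB ImB.
Qed.

End Forms.
Arguments Ec {R d N} f.

Section QForms.
Variable R : realType.
Local Notation C := R[i].
Variables (d N b : nat).
Hypotheses (b0 : (0 < b)%N) (bN : (b %| N)%N).
Local Notation cN := (cube d N).
Local Notation M := (N %/ b)%N.

Lemma bd_neq0 : ((b ^ d)%:R : C) != 0.
Proof. by rewrite pnatr_eq0 -lt0n expn_gt0 b0. Qed.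

Lemma Qsum (f : cN -> C) (Y : cube d M) :
  \sum_(x : cN | inblock b Y x) f x = (b ^ d)%:R * Qav b f Y.
Proof. by rewrite /Qav mulrA mulfV ?bd_neq0 // mul1r. Qed.

Lemma Q_form (f : cN -> C) :
  \sum_(x : cN) Num.conj (f x) * Qadj b (Qav b f) x =
  ((b ^ d)%:R * \sum_(Y : cube d M) sq (Qav b f Y))%:C%C.
Proof.
rewrite /Qadj.
under eq_bigr do rewrite mulr_sumr big_mkcond.
rewrite exchange_big /=.
under eq_bigr do rewrite -big_mkcond -mulr_suml -rmorph_sum Qsum rmorphM /= conjC_nat -mulrA conj_mul.
by rewrite -mulr_sumr rmorphM /= -rmorph_sum natC.
Qed.

Lemma sq_form (f : cN -> C) :
  \sum_(x : cN) Num.conj (f x) * f x = (\sum_(x : cN) sq (f x))%:C%C.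
Proof. by rewrite rmorph_sum; apply: eq_bigr => x _; rewrite conj_mul. Qed.

Lemma card_cube : #|{: cube d b}| = (b ^ d)%N.
Proof. by rewrite card_ffun !card_ord. Qed.

Lemma block_poinc (f : cN -> C) (Y : cube d M) :
  \sum_(r : cube d b) sq (f (Phi d N b bN Y r)) <=
  d%:R * b%:R * b%:R * (Eg (fun r => complex.Re (f (Phi d N b bN Y r))) +
                        Eg (fun r => complex.Im (f (Phi d N b bN Y r))))
  + (b ^ d)%:R * sq (Qav b f Y).
Proof.
have H1 := @poincare_real R d b (fun r => complex.Re (f (Phi d N b bN Y r))).
have H2 := @poincare_real R d b (fun r => complex.Im (f (Phi d N b bN Y r))).
rewrite card_cube /= in H1 H2.
have S : (\sum_(r : cube d b) complex.Re (f (Phi d N b bN Y r))) ^+ 2 +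
         (\sum_(r : cube d b) complex.Im (f (Phi d N b bN Y r))) ^+ 2 =
         (b ^ d)%:R ^+ 2 * sq (Qav b f Y).
  rewrite -Re_sum -Im_sum -(sum_block d N b b0 bN) Qsum natC ReMr ImMr /sq; ring.
have n0 : 0 < ((b ^ d)%:R : R) by rewrite ltr0n expn_gt0 b0.
rewrite -(ler_pM2l n0).
have -> : \sum_(r : cube d b) sq (f (Phi d N b bN Y r)) =
   \sum_(r : cube d b) complex.Re (f (Phi d N b bN Y r)) ^+ 2 +
   \sum_(r : cube d b) complex.Im (f (Phi d N b bN Y r)) ^+ 2 by rewrite -big_split.
move: H1 H2 S.
set n := ((b ^ d)%:R : R).
set A1 := \sum_(r : cube d b) complex.Re _ ^+ 2.
set A2 := \sum_(r : cube d b) complex.Im _ ^+ 2.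
set s1 := (\sum_(r : cube d b) complex.Re _) ^+ 2.
set s2 := (\sum_(r : cube d b) complex.Im _) ^+ 2.
move=> H1 H2 S.
rewrite mulrDr mulrDr; nra.
Qed.

Lemma glob_poinc (f : cN -> C) :
  \sum_(x : cN) sq (f x) <= d%:R * b%:R * b%:R * Ec f + (b ^ d)%:R * \sum_(Y : cube d M) sq (Qav b f Y).
Proof.
rewrite (sum_Phi d N b b0 bN).
apply: le_trans; first by apply: ler_sum => Y _; exact: block_poinc.
rewrite big_split /= -mulr_sumr -mulr_sumr lerD2r.
have E0 : 0 <= d%:R * b%:R * b%:R :> R by rewrite !mulr_ge0 ?ler0n.
apply: ler_wpM2l => //; rewrite big_split /= /Ec.
apply: lerD.
  exact: (@Eg_block R d N b b0 bN (fun x => complex.Re (f x))).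
exact: (@Eg_block R d N b b0 bN (fun x => complex.Im (f x))).
Qed.

End QForms.

Section Main.
Variable R : realType.
Local Notation C := R[i].
Variables (d N b : nat).
Hypotheses (b0 : (0 < b)%N) (bN : (b %| N)%N).
Local Notation cN := (cube d N).
Local Notation M := (N %/ b)%N.

Lemma ip_Hop (eps mu aa : R) (f : cN -> C) :
  ip eps f (Hop eps mu aa b f) =
  (eps ^+ d * (eps ^- 2 * Ec f + mu * \sum_(x : cN) sq (f x) +
               aa * ((b ^ d)%:R * \sum_(Y : cube d M) sq (Qav b f Y))))%:C%C.
Proof.
rewrite /ip /Hop rmorphM /=; congr (_ * _).
have -> : \sum_(x : cN) Num.conj (f x) * (- neuLap eps f x + mu%:C%C * f x + aa%:C%C * Qadj b (Qav b f) x)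
  = - \sum_(x : cN) Num.conj (f x) * neuLap eps f x + mu%:C%C * \sum_(x : cN) Num.conj (f x) * f x
    + aa%:C%C * \sum_(x : cN) Num.conj (f x) * Qadj b (Qav b f) x.
  rewrite !mulr_sumr -sumrN -!big_split /=; apply: eq_bigr => x _; ring.
by rewrite neu_form sq_form (@Q_form R d N b b0) opprK !rmorphD !rmorphM.
Qed.

Lemma ip_Lap1 (eps c : R) (f : cN -> C) :
  ip eps f (fun x => c%:C%C * Lap1 eps f x) =
  (eps ^+ d * (c * (eps ^- 2 * Ec f + \sum_(x : cN) sq (f x))))%:C%C.
Proof.
rewrite /ip /Lap1 rmorphM /=; congr (_ * _).
have -> : \sum_(x : cN) Num.conj (f x) * (c%:C%C * (- neuLap eps f x + f x))
  = c%:C%C * (- \sum_(x : cN) Num.conj (f x) * neuLap eps f x + \sum_(x : cN) Num.conj (f x) * f x).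
  rewrite -sumrN -big_split /= mulr_sumr; apply: eq_bigr => x _; ring.
rewrite neu_form sq_form opprK [RHS]rmorphM /= [in RHS]rmorphD. reflexivity.
Qed.

Lemma form_main (eps mu aa c : R) :
  0 < eps -> eps * b%:R = 1 -> 0 <= mu -> 0 <= c -> c * (1 + d%:R) <= 1 -> c <= aa ->
  form_ge eps (Hop eps mu aa b) (fun (f : cN -> C) x => c%:C%C * Lap1 eps f x).
Proof.
move=> e0 eb mu0 c0 cd ca f.
rewrite ip_Hop ip_Lap1 lecR; apply: ler_wpM2l; first by rewrite exprn_ge0 // ltW.
have e2 : eps ^- 2 = b%:R * b%:R.
  have ne : eps != 0 by rewrite gt_eqF.
  have bE : b%:R = eps^-1 by apply: (mulfI ne); rewrite eb mulfV.
  by rewrite -exprVn -bE expr2.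
have P := @glob_poinc R d N b b0 bN f.
rewrite e2.
set E := Ec f in P *; set SQ := \sum_(x : cN) sq (f x) in P *.
set QQ := \sum_(Y : cube d M) sq (Qav b f Y) in P *.
set B := ((b ^ d)%:R : R) in P *.
set bb := b%:R * b%:R.
have E0 : 0 <= E by rewrite /E /Ec; apply: addr_ge0; apply: sumr_ge0 => z _; apply: sumr_ge0 => j _; exact: sqr_ge0.
have SQ0 : 0 <= SQ by apply: sumr_ge0 => x _; exact: sq_ge0.
have QQ0 : 0 <= QQ by apply: sumr_ge0 => x _; exact: sq_ge0.
have B0 : 0 <= B by exact: ler0n.
have bb0 : 0 <= bb by rewrite /bb mulr_ge0 ?ler0n.
have d0 : 0 <= d%:R :> R by exact: ler0n.
have P' : SQ <= d%:R * bb * E + B * QQ by move: P; rewrite /bb !mulrA.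
have H1 : c * SQ <= c * (d%:R * bb * E + B * QQ) by exact: ler_wpM2l.
have H2 : c * (bb * E) * (1 + d%:R) <= bb * E.
  rewrite mulrAC; apply: ler_piMl => //; exact: mulr_ge0.
have H3 : c * (B * QQ) <= aa * (B * QQ) by apply: ler_wpM2r => //; exact: mulr_ge0.
have H4 : 0 <= mu * SQ by exact: mulr_ge0.
nra.
Qed.

End Main.

Section LinInv.
Variables (F : fieldType) (T : finType).
Local Notation n := #|T|.

Definition enc (u : T -> F) : 'rV[F]_n := \row_i u (enum_val i).
Definition dec (v : 'rV[F]_n) : T -> F := fun x => v 0 (enum_rank x).

Lemma decK u : dec (enc u) = u.
Proof. by apply: functional_extensionality => x; rewrite /dec /enc mxE enum_rankK. Qed.

Lemma encK v : enc (dec v) = v.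
Proof. by apply/rowP => i; rewrite /dec /enc mxE enum_valK. Qed.

Lemma lin_inv (h : (T -> F) -> (T -> F)) :
  (forall a u v x, h (fun y => a * u y + v y) x = a * h u x + h v x) ->
  (forall u, (forall x, h u x = 0) -> forall x, u x = 0) ->
  exists G, forall f, h (G f) = f /\ G (h f) = f.
Proof.
move=> hl hi.
pose hm v := enc (h (dec v)).
have hmZD : forall a u v, hm (a *: u + v) = a *: hm u + hm v.
  move=> a u v; apply/rowP => i; rewrite /hm /enc !mxE.
  have -> : dec (a *: u + v) = (fun y => a * dec u y + dec v y).
    by apply: functional_extensionality => y; rewrite /dec !mxE.
  exact: hl.
have hmD : {morph hm : u v / u + v}.
  by move=> u v; have := hmZD 1 u v; rewrite !scale1r.
have hm0 : hm 0 = 0.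
  have E := hmD 0 0; rewrite addr0 in E.
  by apply: (addrI (hm 0)); rewrite addr0 -E.
pose M := \matrix_(i, j) hm (delta_mx 0 i) 0 j.
have hmM : forall v, v *m M = hm v.
  move=> v; rewrite {2}(row_sum_delta v).
  rewrite (big_morph hm hmD hm0).
  apply/rowP => j; rewrite !mxE summxE; apply: eq_bigr => i _.
  rewrite mxE.
  by rewrite -[v 0 i *: _]addr0 hmZD hm0 addr0 !mxE.
have Mu : M \in unitmx.
  rewrite -row_free_unit; apply: inj_row_free => v.
  rewrite hmM => H0.
  have H : forall x, h (dec v) x = 0.
    move=> x; have := congr1 (fun w : 'rV_n => w 0 (enum_rank x)) H0.
    by rewrite /hm /enc !mxE enum_rankK.
  apply/rowP => i; rewrite mxE.
  by have := hi _ H (enum_val i); rewrite /dec enum_valK.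
exists (fun f => dec (enc f *m invmx M)) => f; split.
  rewrite -[LHS]decK.
  have -> : enc (h (dec (enc f *m invmx M))) = hm (enc f *m invmx M) by [].
  by rewrite -hmM mulmxKV // decK.
have -> : enc (h f) = enc f *m M by rewrite hmM /hm decK.
by rewrite mulmxK // decK.
Qed.

End LinInv.

Section Lin.
Variable R : realType.
Local Notation C := R[i].
Variables (d N : nat).
Local Notation cN := (cube d N).

Lemma neuLap_lin (eps : R) (a : C) (u v : cN -> C) x :
  neuLap eps (fun y => a * u y + v y) x = a * neuLap eps u x + neuLap eps v x.
Proof.
rewrite /neuLap mulrCA -mulrDr; congr (_ * _).
rewrite mulr_sumr -big_split /=; apply: eq_bigr => mu _; ring.
Qed.

Lemma Qav_lin (b : nat) (a : C) (u v : cN -> C) Y :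
  Qav b (fun y => a * u y + v y) Y = a * Qav b u Y + Qav b v Y.
Proof.
rewrite /Qav big_split /= -mulr_sumr; ring.
Qed.

Lemma Qadj_lin (b : nat) (a : C) (h1 h2 : cube d (N %/ b) -> C) x :
  Qadj b (fun Y => a * h1 Y + h2 Y) x = a * Qadj b h1 x + Qadj b h2 x.
Proof. by rewrite /Qadj big_split /= -mulr_sumr. Qed.

Lemma Hop_lin (eps mu aa : R) (b : nat) (a : C) (u v : cN -> C) x :
  Hop eps mu aa b (fun y => a * u y + v y) x = a * Hop eps mu aa b u x + Hop eps mu aa b v x.
Proof.
rewrite /Hop neuLap_lin.
have -> : Qav b (fun y => a * u y + v y) = (fun Y => a * Qav b u Y + Qav b v Y).
  by apply: functional_extensionality => Y; exact: Qav_lin.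
rewrite Qadj_lin; ring.
Qed.

End Lin.

Lemma sq_eq0 (R : realType) (z : R[i]) : sq z = 0 -> z = 0.
Proof.
case: z => x y; rewrite /sq /= => /eqP; rewrite paddr_eq0 ?sqr_ge0 // !sqrf_eq0.
by case/andP => /eqP -> /eqP ->.
Qed.

Lemma Hop_inj (R : realType) (d N b : nat) (b0 : (0 < b)%N) (bN : (b %| N)%N)
  (eps mu aa c : R) :
  0 < eps -> eps * b%:R = 1 -> 0 <= mu -> 0 < c -> c * (1 + d%:R) <= 1 -> c <= aa ->
  forall f : cube d N -> R[i], (forall x, Hop eps mu aa b f x = 0) -> forall x, f x = 0.
Proof.
move=> e0 eb mu0 c0 cd ca f Hf x.
have H := @form_main R d N b b0 bN eps mu aa c e0 eb mu0 (ltW c0) cd ca f.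
have HZ : Hop eps mu aa b f = (fun _ => 0) by apply: functional_extensionality.
move: H; rewrite HZ ip_Lap1.
have -> : ip eps f (fun _ : cube d N => 0 : R[i]) = (0 : R)%:C%C.
  by rewrite /ip big1 ?mulr0 // => y _; rewrite mulr0.
rewrite lecR.
set E := Ec f; set SQ := \sum_(y : cube d N) sq (f y).
have E0 : 0 <= E by rewrite /E /Ec; apply: addr_ge0; apply: sumr_ge0 => z _; apply: sumr_ge0 => j _; exact: sqr_ge0.
have SQ0 : 0 <= SQ by apply: sumr_ge0 => y _; exact: sq_ge0.
have ed : 0 < eps ^+ d by rewrite exprn_gt0.
have e2 : 0 <= eps ^- 2 by rewrite invr_ge0 exprn_ge0 // ltW.
move=> H.
have SQ00 : SQ = 0.
  have H1 : 0 <= eps ^- 2 * E by exact: mulr_ge0.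
  have : c * (eps ^- 2 * E + SQ) <= 0.
    by move: H; rewrite pmulr_rle0.
  rewrite pmulr_rle0 // => H2.
  by apply/eqP; rewrite eq_le SQ0 andbT; lra.
apply: sq_eq0.
have := SQ00; rewrite /SQ => /eqP; rewrite psumr_eq0 => [/allP Hall|y _]; last exact: sq_ge0.
by apply/eqP; apply: Hall; rewrite mem_index_enum.
Qed.

Lemma aj_ge (R : realType) (a : R) L k : 0 < a -> (1 < L)%N -> (1 <= k)%N -> a / 2 <= a_j a L k.
Proof.
move=> a0 L1 k1.
rewrite /a_j.
set l := (L%:R : R).
have l2 : 2 <= l by rewrite /l (ler_nat R 2 L).
set p := l ^- 2; set q := l ^- (2 * k).
have lp : 0 < l ^+ 2 by rewrite exprn_gt0 //; lra.
have pl : p * l ^+ 2 = 1 by rewrite /p mulVf // gt_eqF.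
have l4 : 4 <= l ^+ 2 by rewrite expr2; nra.
have p0 : 0 < p by rewrite /p invr_gt0.
have lq : 1 < l ^+ (2 * k) by rewrite exprn_egt1 ?muln_eq0 -?lt0n ?k1 //; lra.
have q0 : 0 < q by rewrite /q invr_gt0; lra.
have ql : q * l ^+ (2 * k) = 1 by rewrite /q mulVf // gt_eqF //; lra.
have q1 : q < 1 by nra.
have p4 : p <= 1 / 4 by nra.
rewrite ler_pdivlMr; last by lra.
nra.
Qed.

Theorem mainTheorem2 (R : realType) (d : nat) (a : R) :
  (1 <= d)%N -> 0 < a -> a <= 1 ->
  exists c : R, 0 < c /\
  forall (L k m : nat) (mu0 : R),
    odd L -> (1 < L)%N -> (1 <= k)%N -> (k <= m)%N -> 0 <= mu0 ->
    (forall y : cube d (L ^ (m - k)),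
       form_ge (N := L ^ k) (etaL R L k)
         (Hop (etaL R L k) (mubar mu0 L k) (a_j a L k) (L ^ k))
         (fun (f : cube d (L ^ k) -> R[i]) x => (c%:C)%C * Lap1 (etaL R L k) f x))
    /\
    form_ge (etaL R L k)
      (Hop (N := L ^ m) (etaL R L k) (mubar mu0 L k) (a_j a L k) (L ^ k))
      (fun (f : cube d (L ^ m) -> R[i]) x => (c%:C)%C * Lap1 (etaL R L k) f x)
    /\
    exists G : (cube d (L ^ m) -> R[i]) -> (cube d (L ^ m) -> R[i]),
      forall f : cube d (L ^ m) -> R[i],
        Hop (etaL R L k) (mubar mu0 L k) (a_j a L k) (L ^ k) (G f) = f /\
        G (Hop (etaL R L k) (mubar mu0 L k) (a_j a L k) (L ^ k) f) = f.
Proof.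
move=> d1 a0 a1.
have d0 : 0 <= d%:R :> R by exact: ler0n.
exists (a / (2 * (1 + d%:R))).
have den : 0 < 2 * (1 + d%:R) :> R by lra.
split; first by rewrite divr_gt0.
move=> L k m mu0 oddL L1 k1 km mu00.
set c := a / (2 * (1 + d%:R)).
have c0 : 0 < c by rewrite divr_gt0.
have cd : c * (1 + d%:R) <= 1.
  rewrite /c mulrAC ler_pdivrMr //; nra.
have ca : c <= a_j a L k.
  apply: (@le_trans _ _ (a / 2)); last exact: (@aj_ge R a L k a0 L1 k1).
  rewrite /c ler_pM2l // lef_pV2 ?posrE //; lra.
have b0 : (0 < L ^ k)%N by rewrite expn_gt0 (ltn_trans _ L1).
have e0 : 0 < etaL R L k by rewrite /etaL invr_gt0 exprn_gt0 // ltr0n (ltn_trans _ L1).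
have eb : etaL R L k * (L ^ k)%:R = 1.
  by rewrite /etaL natrX mulVf // gt_eqF // exprn_gt0 // ltr0n (ltn_trans _ L1).
have mu0' : 0 <= mubar mu0 L k by rewrite /mubar mulr_ge0 // exprn_ge0 // ler0n.
have bN : (L ^ k %| L ^ m)%N by exact: dvdn_exp2l.
split.
  move=> _; exact: (@form_main R d (L ^ k) (L ^ k) b0 (dvdnn _) _ _ _ _ e0 eb mu0' (ltW c0) cd ca).
split.
  exact: (@form_main R d (L ^ m) (L ^ k) b0 bN _ _ _ _ e0 eb mu0' (ltW c0) cd ca).
apply: lin_inv.
  by move=> a' u v x; exact: Hop_lin.
exact: (@Hop_inj R d (L ^ m) (L ^ k) b0 bN _ _ _ c e0 eb mu0' c0 cd ca).
Qed.
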